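(* Let $R,r,I,\iota,L,G,P$ be real numbers with $R>0$, $0<r<R$, $I>0$, $0<\iota<I$, $\iota<r$, $L>0$, $G>0$, $P>0$ and $G+P-L>r-\iota$, and set $$a=G+P-r-L+\iota,\quad b=r-\iota+\tfrac{L}{2},\quad c=G+I-\iota+P,\quad d=\tfrac{L}{2}+\iota.$$ Let $M=\{(x,y)\in\mathbb{R}^2:0<x,y<1\}$, $\varphi(x,y)=xy(1-x)(1-y)$, $\omega=\frac{1}{\varphi}\mathrm{d}x\wedge\mathrm{d}y$, and $H:M\to\mathbb{R}$, $H(x,y)=c\ln(x)+d\ln(1-x)+a\ln(y)+b\ln(1-y)$. Then the solutions (in $M$) of the system $$\dot x=x(1-x)\big(a-(a+b)y\big),\qquad \dot y=y(1-y)\big(-c+(c+d)x\big)$$ are exactly the motions of the Hamiltonian system $(M,\omega,H)$.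
   Context: The Hamiltonian vector field $X_H$ is defined by $\omega(X_H,\cdot)=\mathrm{d}H$. A motion of the Hamiltonian system $(M,\omega,H)$ is a differentiable curve $\gamma$ in $M$ with $\frac{\mathrm{d}}{\mathrm{d}t}\gamma(t)|_{t=s}=X_H(\gamma(s))$ for all $s$. *)

(* Defs.v *)
From HB Require Import structures.
From mathcomp Require Import all_boot all_order all_algebra.
From mathcomp Require Import all_classical all_reals all_analysis.
Set Implicit Arguments. Unset Strict Implicit. Unset Printing Implicit Defensive.
Import Order.TTheory GRing.Theory Num.Theory.
Import numFieldNormedType.Exports.
Local Open Scope classical_set_scope.
Local Open Scope ring_scope.

Section Defs.
Variable R : realType.

Definition Msq : set (R * R) :=
  [set p | 0 < p.1 < 1 /\ 0 < p.2 < 1].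

Definition phi (p : R * R) : R := p.1 * p.2 * (1 - p.1) * (1 - p.2).

(* omega = (1/phi) dx /\ dy, evaluated at p on tangent vectors u v *)
Definition omega (p u v : R * R) : R := (u.1 * v.2 - u.2 * v.1) / phi p.

Definition Ham (a b c d : R) (p : R * R) : R :=
  c * ln p.1 + d * ln (1 - p.1) + a * ln p.2 + b * ln (1 - p.2).

Definition hamVF (H : R * R -> R) (p : R * R) : R * R :=
  get (fun v : R * R => forall w : R * R, omega p v w = 'd H p w).

Definition is_motion (H : R * R -> R) (D : set R) (gam : R -> R * R) : Prop :=
  (forall s, D s -> Msq (gam s)) /\
  (forall s, D s -> derivable gam s 1 /\ 'D_1 gam s = hamVF H (gam s)).

Definition odeField (a b c d : R) (p : R * R) : R * R :=
  (p.1 * (1 - p.1) * (a - (a + b) * p.2),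
   p.2 * (1 - p.2) * (- c + (c + d) * p.1)).

Definition is_solution (a b c d : R) (D : set R) (gam : R -> R * R) : Prop :=
  (forall s, D s -> Msq (gam s)) /\
  (forall s, D s -> derivable gam s 1 /\ 'D_1 gam s = odeField a b c d (gam s)).

End Defs.

(* Main.v *)
Require Import Defs.
From HB Require Import structures.
From mathcomp Require Import all_boot all_order all_algebra.
From mathcomp Require Import all_classical all_reals all_analysis.
From mathcomp Require Import ring lra.
Import Order.TTheory GRing.Theory Num.Theory.
Import numFieldNormedType.Exports.
Local Open Scope classical_set_scope.
Local Open Scope ring_scope.



Section H.
Variable R : realType.


Lemma fst_cont : continuous (@fst R R).
Proof. move=> x; exact: cvg_fst. Qed.
Lemma snd_cont : continuous (@snd R R).
Proof. move=> x; exact: cvg_snd. Qed.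

Lemma dfst (p : R * R) : differentiable (@fst R R) p /\ 'd (@fst R R) p = fst :> (R*R -> R).
Proof.
pose d (q : R * R) := q.1.
have lin : linear d by move=> k u v.
pose fstL : {linear _ -> _} := HB.pack d (GRing.isLinear.Build _ _ _ _ _ lin).
have c : continuous fstL by exact: fst_cont.
split; first exact: (@linear_differentiable _ _ _ fstL _ c).
exact: (@diff_lin _ _ _ fstL _ c).
Qed.
Lemma dsnd (p : R * R) : differentiable (@snd R R) p /\ 'd (@snd R R) p = snd :> (R*R -> R).
Proof.
pose d (q : R * R) := q.2.
have lin : linear d by move=> k u v.
pose fstL : {linear _ -> _} := HB.pack d (GRing.isLinear.Build _ _ _ _ _ lin).
have c : continuous fstL by exact: snd_cont.
split; first exact: (@linear_differentiable _ _ _ fstL _ c).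
exact: (@diff_lin _ _ _ fstL _ c).
Qed.

Lemma dln (t : R) : 0 < t -> differentiable (@ln R) t /\ 'd (@ln R) t = (fun h => h * t^-1) :> (R -> R).
Proof.
move=> t0; have D := is_derive1_ln t0.
have dv : derivable (@ln R) t 1 by case: D.
split; first exact/derivable1_diffP.
rewrite deriv1E // derive1E; case: D => _ ->. done.
Qed.

Lemma dln1 (t : R) : t < 1 -> differentiable (fun s : R => ln (1 - s)) t /\
  'd (fun s : R => ln (1 - s)) t = (fun h => h * (- (1 - t)^-1)) :> (R -> R).
Proof.
move=> t1.
have D : is_derive t 1 ((@ln R) \o (fun s => 1 - s)) ((1 - t)^-1 * (-1)).
  apply: is_derive1_comp; first by apply: is_derive1_ln; rewrite subr_gt0.
  have -> : (fun s : R => 1 - s) = cst 1 - id by [].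
  rewrite -[X in is_derive _ _ _ X]sub0r.
  exact: is_deriveB.
have dv : derivable ((@ln R) \o (fun s => 1 - s)) t 1 by case: D.
split; first exact/derivable1_diffP.
rewrite deriv1E // derive1E; case: D => _ ->. apply/funext => h /=.
by rewrite mulrN1.
Qed.

Lemma dD_at (V W : normedModType R) (f g : V -> W) (p w : V) :
  differentiable f p -> differentiable g p ->
  'd (f + g) p w = 'd f p w + 'd g p w.
Proof. move=> Df Dg; exact: (congr1 (fun F => F w) (diffD Df Dg)). Qed.
Lemma dZ_at (V W : normedModType R) (a : R) (f : V -> W) (p w : V) :
  differentiable f p -> 'd (a *: f) p w = a *: 'd f p w.
Proof. move=> D1; exact: (congr1 (fun F => F w) (diffZ a D1)). Qed.
Lemma d4 (V W : normedModType R) (a b c d : R) (f1 f2 f3 f4 : V -> W) (p : V) :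
  differentiable f1 p -> differentiable f2 p -> differentiable f3 p -> differentiable f4 p ->
  forall w, 'd (c *: f1 + d *: f2 + a *: f3 + b *: f4) p w =
    c *: 'd f1 p w + d *: 'd f2 p w + a *: 'd f3 p w + b *: 'd f4 p w.
Proof.
move=> D1 D2 D3 D4 w.
have Z1 := differentiableZ c D1. have Z2 := differentiableZ d D2.
have Z3 := differentiableZ a D3. have Z4 := differentiableZ b D4.
have S1 := differentiableD Z1 Z2. have S2 := differentiableD S1 Z3.
etransitivity; first exact: dD_at S2 Z4.
congr (_ + _); last exact: dZ_at.
etransitivity; first exact: dD_at S1 Z3.
congr (_ + _); last exact: dZ_at.
etransitivity; first exact: dD_at Z1 Z2.
by congr (_ + _); exact: dZ_at.
Qed.
Lemma dcomp1 (g : R -> R) (f : R * R -> R) (p : R * R) (k : R) :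
  differentiable f p -> 'd f p = f :> (R * R -> R) ->
  differentiable g (f p) -> 'd g (f p) = (fun h => h * k) :> (R -> R) ->
  differentiable (g \o f) p /\ forall w, 'd (g \o f) p w = f w * k.
Proof.
move=> df ef dg eg; split; first exact: differentiable_comp.
move=> w.
etransitivity; first exact: (congr1 (fun F => F w) (diff_comp df dg)).
transitivity ('d g (f p) (f w)).
  exact: (congr1 (fun F => 'd g (f p) (F w)) ef).
exact: (congr1 (fun F => F (f w)) eg).
Qed.

Lemma dHam (a b c d : R) (p : R * R) : Msq p -> forall w : R * R,
  'd (Ham a b c d) p w = c * (w.1 * p.1^-1) + d * (w.1 * - (1 - p.1)^-1)
     + a * (w.2 * p.2^-1) + b * (w.2 * - (1 - p.2)^-1).
Proof.
move=> [/andP[x0 x1] /andP[y0 y1]] w.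
pose g2 := fun s : R => ln (1 - s).
have [df1 ef1] := dfst p. have [df2 ef2] := dsnd p.
have [dl1 el1] := dln _ x0. have [dl2 el2] := dln _ y0.
have [dm1 em1] := dln1 _ x1. have [dm2 em2] := dln1 _ y1.
have [D1 F1] := dcomp1 _ _ _ _ df1 ef1 dl1 el1.
have [D2 F2] := dcomp1 _ _ _ _ df1 ef1 dm1 em1.
have [D3 F3] := dcomp1 _ _ _ _ df2 ef2 dl2 el2.
have [D4 F4] := dcomp1 _ _ _ _ df2 ef2 dm2 em2.
etransitivity; first exact: (@d4 (R*R)%type R a b c d _ _ _ _ p D1 D2 D3 D4 w).
by rewrite F1 F2 F3 F4.
Qed.

Lemma hamVF_eq (a b c d : R) (p : R * R) : Msq p ->
  hamVF (Ham a b c d) p = odeField a b c d p.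
Proof.
move=> Mp; have dH := dHam a b c d p Mp.
case: Mp => /andP[x0 x1] /andP[y0 y1].
have nx : p.1 != 0 by rewrite gt_eqF.
have ny : p.2 != 0 by rewrite gt_eqF.
have nx1 : 1 - p.1 != 0 by rewrite subr_eq0 eq_sym lt_eqF.
have ny1 : 1 - p.2 != 0 by rewrite subr_eq0 eq_sym lt_eqF.
have nphi : phi p != 0 by rewrite /phi !mulf_neq0.
have Hode : forall w, omega p (odeField a b c d p) w = 'd (Ham a b c d) p w.
  move=> w; rewrite dH /omega /phi /odeField /=.
  by field; rewrite ?nx ?ny ?nx1 ?ny1.
rewrite /hamVF.
have := @getPex _ (fun v : R * R => forall w, omega p v w = 'd (Ham a b c d) p w) (ex_intro _ _ Hode).
set v := get _ => Hv.
have e1 := Hv (0, 1). have e2 := Hv (1, 0).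
rewrite -Hode /omega /= in e1.
rewrite -Hode /omega /= in e2.
move: e1 e2; rewrite !mulr0 !mulr1 !subr0 !sub0r => e1 e2.
have f1 : v.1 = (odeField a b c d p).1.
  by apply: (mulIf (invr_neq0 nphi)).
have f2 : v.2 = (odeField a b c d p).2.
  apply: (mulIf (invr_neq0 nphi)); apply: oppr_inj; move: e2; rewrite !mulNr; exact.
clearbody v; move: f1 f2; case: v {Hv e1 e2} => v1 v2 /= -> ->; by [].
Qed.
End H.

Theorem mainTheorem6 (R : realType) (Rr r I iota L G P : R) :
  0 < Rr -> 0 < r -> r < Rr -> 0 < I -> 0 < iota -> iota < I -> iota < r ->
  0 < L -> 0 < G -> 0 < P -> r - iota < G + P - L ->
  let a := G + P - r - L + iota in
  let b := r - iota + L / 2 in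
  let c := G + I - iota + P in
  let d := L / 2 + iota in
  forall (D : set R) (gam : R -> R * R), open D ->
    is_solution a b c d D gam <-> is_motion (Ham a b c d) D gam.
Proof.
move=> _ _ _ _ _ _ _ _ _ _ _ a b c d D gam _.
split.
- move=> [HM HD]; split=> // s Ds.
  have [dv e] := HD s Ds; split=> //.
  by rewrite e (@hamVF_eq _ a b c d _ (HM s Ds)).
- move=> [HM HD]; split=> // s Ds.
  have [dv e] := HD s Ds; split=> //.
  by rewrite e (@hamVF_eq _ a b c d _ (HM s Ds)).
Qed.
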